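(* Let $\mathsf{PA}^-$ be the theory of the non-negative parts of discretely ordered commutative rings, and let $T$ be $\mathsf{PA}^-$ together with all universal sentences (in the language $0,1,+,\cdot,\leq$) that are true in $\mathbb N$. Using the Markov coding of sequences (ur-strings) described in the context, and coding Hilbert-style proofs of the theory $\mathsf{BeSh}$ by such ur-strings, $T$ does not prove the sentence $\mathsf{con}(\mathsf{BeSh})$.
   Context: The theory $\mathsf{BeSh}$: its language consists of exactly two sentences, $\bot$ and $(\bot\to\bot)$; its only axiom is $(\bot\to\bot)$; its only rule is Modus Ponens (from $\bot$ and $(\bot\to\bot)$ infer $\bot$). A Hilbert-style proof is a finite sequence of sentences in which each occurrence is either an axiom or follows by Modus Ponens from two strictly earlier occurrences. Fix Gödel numbers $\ulcorner\bot\urcorner$ and $\ulcorner\bot\to\bot\urcorner$, which are distinct positive natural numbers. Markov coding. For a discretely ordered commutative ring $\mathcal R$ with non-negative part $\mathcal R^+$, let $\mathsf{SL}_2(\mathcal R^+)$ be the monoid (under matrix multiplication) of $2\times 2$ matrices with entries in $\mathcal R^+$ and determinant $1$; in a model of $\mathsf{PA}^-$ such matrices are represented by quadruples of elements, and quantifiers over matrices range over such quadruples. Write $\alpha_{ij}$ ($i,j\in\{0,1\}$) for the entries. Let $\mathtt A=\begin{pmatrix}1&1\\0&1\end{pmatrix}$, $\mathtt B=\begin{pmatrix}1&0\\1&1\end{pmatrix}$, and for a number $n$ let $[n]:=\mathtt B\mathtt A^n=\begin{pmatrix}1&n\\1&n+1\end{pmatrix}$. Define: $\alpha\le\beta$ iff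 $\alpha_{ij}\le\beta_{ij}$ for all $i,j$, and $\alpha<\beta$ iff $\alpha\le\beta$ and $\alpha\ne\beta$; $\alpha\preceq_{\mathsf i}\beta$ iff $\alpha^{-1}\beta$ has non-negative entries (i.e. $\alpha_{11}\beta_{00}\ge\alpha_{01}\beta_{10}$, $\alpha_{11}\beta_{01}\ge\alpha_{01}\beta_{11}$, $\alpha_{00}\beta_{10}\ge\alpha_{10}\beta_{00}$, $\alpha_{00}\beta_{11}\ge\alpha_{10}\beta_{01}$), and $\alpha\preceq_{\mathsf e}\beta$ iff $\beta\alpha^{-1}$ has non-negative entries; $\mathsf{ur}(\alpha)$ iff $\alpha$ is the identity matrix or $\mathtt B\preceq_{\mathsf i}\alpha$; $\alpha\preceq^{\mathsf u}_{\mathsf i}\beta$ iff $\alpha\preceq_{\mathsf i}\beta\wedge\mathsf{ur}(\alpha)\wedge\mathsf{ur}(\alpha^{-1}\beta)$, and $\alpha\preceq^{\mathsf u}_{\mathsf e}\beta$ iff $\alpha\preceq_{\mathsf e}\beta\wedge\mathsf{ur}(\alpha)\wedge\mathsf{ur}(\beta\alpha^{-1})$; $\mathsf{occ}(\alpha,n,\beta)$ iff $\alpha\preceq^{\mathsf u}_{\mathsf i}\beta\wedge[n]\preceq^{\mathsf u}_{\mathsf e}\alpha$. $\mathsf{proof}_0(\pi)$ is the formula: $\mathsf{ur}(\pi)\wedge\forall\alpha\le\pi\,\forall n\le\alpha_{01}\,(\mathsf{occ}(\alpha,n,\pi)\to(n=\ulcorner\bot\to\bot\urcorner\vee n=\ulcorner\bot\urcorner))\wedge\forall\alpha\le\pi\,(\mathsf{occ}(\alpha,\ulcorner\bot\urcorner,\pi)\to\exists\beta<\alpha\,\exists\gamma<\alpha\,(\mathsf{occ}(\beta,\ulcorner\bot\urcorner,\alpha)\wedge\mathsf{occ}(\gamma,\ulcorner\bot\to\bot\urcorner,\alpha)))$.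 $\mathsf{proof}(\pi,n)$ iff $\mathsf{proof}_0(\pi)\wedge[n]\preceq_{\mathsf e}\pi$. Finally $\mathsf{con}(\mathsf{BeSh})$ is $\forall\pi\,\neg\mathsf{proof}(\pi,\ulcorner\bot\urcorner)$. *)

(* Defs.v *)
From mathcomp Require Import all_boot all_order all_algebra.
Set Implicit Arguments. Unset Strict Implicit. Unset Printing Implicit Defensive.
Import Order.TTheory GRing.Theory Num.Theory.
Local Open Scope ring_scope.

Inductive term : Type :=
  | tvar of nat | tzero | tone
  | tplus of term & term | ttimes of term & term.

Inductive qf : Type :=
  | qeq of term & term | qle of term & term
  | qnot of qf | qand of qf & qf | qor of qf & qf | qimp of qf & qf.

Fixpoint teval (A : Type) (z o : A) (ad mu : A -> A -> A) (e : nat -> A)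
  (t : term) : A :=
  match t with
  | tvar i => e i
  | tzero => z
  | tone => o
  | tplus t1 t2 => ad (teval z o ad mu e t1) (teval z o ad mu e t2)
  | ttimes t1 t2 => mu (teval z o ad mu e t1) (teval z o ad mu e t2)
  end.

Fixpoint feval (A : Type) (z o : A) (ad mu : A -> A -> A) (le : A -> A -> Prop)
  (e : nat -> A) (f : qf) : Prop :=
  match f with
  | qeq t1 t2 => teval z o ad mu e t1 = teval z o ad mu e t2
  | qle t1 t2 => le (teval z o ad mu e t1) (teval z o ad mu e t2)
  | qnot g => ~ feval z o ad mu le e g
  | qand g h => feval z o ad mu le e g /\ feval z o ad mu le e h
  | qor g h => feval z o ad mu le e g \/ feval z o ad mu le e h
  | qimp g h => feval z o ad mu le e g -> feval z o ad mu le e h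
  end.

Definition true_in_N (f : qf) : Prop :=
  forall e : nat -> nat, feval 0%N 1%N addn muln (fun a b => (a <= b)%N) e f.

Definition holds_in_Rplus (R : realDomainType) (f : qf) : Prop :=
  forall e : nat -> R, (forall i, 0 <= e i) ->
    feval 0 1 +%R *%R (fun a b : R => a <= b) e f.

Definition discrete (R : realDomainType) : Prop :=
  forall x : R, 0 < x -> 1 <= x.

(* R^+ satisfies every universal sentence true in N (together with PA^-,
   which R^+ satisfies automatically as R is a discretely ordered ring). *)
Definition models_T (R : realDomainType) : Prop :=
  discrete R /\ forall f : qf, true_in_N f -> holds_in_Rplus R f.

Record mat (R : Type) := Mat { m00 : R; m01 : R; m10 : R; m11 : R }.

Section Markov.
Variable R : realDomainType.
Implicit Types a b c : mat R.

Definition sl2p a : Prop :=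
  [/\ 0 <= m00 a, 0 <= m01 a, 0 <= m10 a, 0 <= m11 a
    & m00 a * m11 a - m01 a * m10 a = 1].

Definition mmul a b : mat R :=
  Mat (m00 a * m00 b + m01 a * m10 b) (m00 a * m01 b + m01 a * m11 b)
      (m10 a * m00 b + m11 a * m10 b) (m10 a * m01 b + m11 a * m11 b).

(* inverse of a determinant-1 matrix *)
Definition minv a : mat R := Mat (m11 a) (- m01 a) (- m10 a) (m00 a).

Definition nonneg a : Prop :=
  [/\ 0 <= m00 a, 0 <= m01 a, 0 <= m10 a & 0 <= m11 a].

Definition mle a b : Prop :=
  [/\ m00 a <= m00 b, m01 a <= m01 b, m10 a <= m10 b & m11 a <= m11 b].
Definition mlt a b : Prop := mle a b /\ a <> b.

Definition matI : mat R := Mat 1 0 0 1.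
Definition matA : mat R := Mat 1 1 0 1.
Definition matB : mat R := Mat 1 0 1 1.
(* [n] = B A^n *)
Definition mcode (n : R) : mat R := Mat 1 n 1 (n + 1).

Definition prec_i a b : Prop := nonneg (mmul (minv a) b).
Definition prec_e a b : Prop := nonneg (mmul b (minv a)).
Definition ur a : Prop := a = matI \/ prec_i matB a.
Definition prec_iu a b : Prop := [/\ prec_i a b, ur a & ur (mmul (minv a) b)].
Definition prec_eu a b : Prop := [/\ prec_e a b, ur a & ur (mmul b (minv a))].
Definition occ a (n : R) b : Prop := prec_iu a b /\ prec_eu (mcode n) a.

(* gb = Goedel number of bot, gbb = Goedel number of (bot -> bot) *)
Definition proof0 (gb gbb : nat) (p : mat R) : Prop :=
  [/\ ur p,
      (forall a, sl2p a -> mle a p ->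
         forall n : R, 0 <= n -> n <= m01 a ->
           occ a n p -> n = gbb%:R \/ n = gb%:R)
    & (forall a, sl2p a -> mle a p -> occ a gb%:R p ->
         exists b c, [/\ sl2p b, sl2p c, mlt b a, mlt c a &
                         (occ b gb%:R a /\ occ c gbb%:R a)])].

Definition proof (gb gbb : nat) (p : mat R) (n : R) : Prop :=
  proof0 gb gbb p /\ prec_e (mcode n) p.

Definition con_BeSh (gb gbb : nat) : Prop :=
  forall p, sl2p p -> ~ proof gb gbb p gb%:R.

End Markov.

(* Main.v *)
Require Import Defs.
From HB Require Import structures.
From mathcomp Require Import all_boot all_order all_algebra.
From mathcomp Require Import zify ring lra.
From mathcomp Require Import boolp realalg.
Import Order.TTheory GRing.Theory Num.Theory.
Local Open Scope ring_scope.
Set Implicit Arguments. Unset Strict Implicit. Unset Printing Implicit Defensive.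

Definition ev (P : nat -> Prop) := exists M, forall m, (M <= m)%N -> P m.

Lemma ev_and (P Q : nat -> Prop) : ev P -> ev Q -> ev (fun m => P m /\ Q m).
Proof.
case=> M1 H1 [M2 H2]; exists (maxn M1 M2) => m hm; split.
  by apply: H1; apply: leq_trans hm; apply: leq_maxl.
by apply: H2; apply: leq_trans hm; apply: leq_maxr.
Qed.

Lemma ev_imp (P Q : nat -> Prop) : (forall m, P m -> Q m) -> ev P -> ev Q.
Proof. by move=> h [M HM]; exists M => m /HM /h. Qed.

Lemma ev_true (P : nat -> Prop) : (forall m, P m) -> ev P.
Proof. by move=> h; exists 0%N. Qed.

Section Dom.
Variable F : archiRealFieldType.
Variables mu la : F.
Hypothesis mu1 : 1 < mu.
Hypothesis la1 : 1 < la.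

Definition key := (int * int)%type.
Definition mono (p : key) (m : nat) : F :=
  mu ^ (p.1 * m%:Z) * la ^ (p.2 * (m * m)%N%:Z).
Definition phi (L : seq (key * F)) (m : nat) : F := \sum_(t <- L) t.2 * mono t.1 m.
Definition cs (L : seq (key * F)) (p : key) : F := \sum_(t <- L | t.1 == p) t.2.

Lemma mu0 : 0 < mu. Proof. exact: lt_trans ltr01 mu1. Qed.
Lemma la0 : 0 < la. Proof. exact: lt_trans ltr01 la1. Qed.

Lemma mono_gt0 p m : 0 < mono p m.
Proof. by rewrite /mono mulr_gt0 // exprz_gt0 // ?mu0 ?la0. Qed.

Lemma mono_add p q m : mono (p.1 + q.1, p.2 + q.2) m = mono p m * mono q m.
Proof.
rewrite /mono /= !mulrDl !exprzDr ?unitfE ?gt_eqF ?mu0 ?la0 //.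
by rewrite mulrACA.
Qed.

Lemma phi_split L p m :
  phi L m = cs L p * mono p m + phi [seq t <- L | t.1 != p] m.
Proof.
rewrite /phi /cs (bigID (fun t => t.1 == p)) /= big_filter mulr_suml.
congr (_ + _); apply: eq_bigr => t /eqP -> //.
Qed.

Lemma cs_filter L p q :
  cs [seq t <- L | t.1 != p] q = if q == p then 0 else cs L q.
Proof.
rewrite /cs big_filter_cond; case: eqP => [->|/eqP ne].
  by apply: big1 => t /andP [/negbTE ->].
apply: eq_bigl => t; case: (eqVneq t.1 q) => [->|]; rewrite ?andbT ?andbF //.
Qed.

Lemma size_filter_lt (L : seq (key * F)) p :
  p \in map fst L -> (size [seq t <- L | t.1 != p] < size L)%N.
Proof.
move=> /mapP [t tL ->]; rewrite size_filter -[X in (_ < X)%N](count_predC (fun t0 : key * F => t0.1 != t.1)).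
rewrite -[X in (X < _)%N]addn0 ltn_add2l -has_count; apply/hasP; exists t => //=.
by rewrite negbK.
Qed.

Lemma phi0 L : (forall p, cs L p = 0) -> forall m, phi L m = 0.
Proof.
move: {2}(size L) (leqnn (size L)) => n; elim: n L => [|n IH] L.
  by rewrite leqn0 => /nilP -> _ m; rewrite /phi big_nil.
case: L => [|t L'] hs hcs m; first by rewrite /phi big_nil.
rewrite (phi_split _ t.1) hcs mul0r add0r; apply: IH.
  rewrite -ltnS; apply: leq_trans hs; apply: size_filter_lt.
  by rewrite inE eqxx.
by move=> q; rewrite cs_filter hcs; case: ifP.
Qed.

Definition lexle (p q : key) := (p.2 < q.2) || ((p.2 == q.2) && (p.1 <= q.1)).
Definition negk (k : key) := (k.2 < 0) || ((k.2 == 0) && (k.1 < 0)).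

Lemma lexle_refl p : lexle p p.
Proof. by rewrite /lexle eqxx lexx orbT. Qed.

Lemma lexle_total p q : lexle p q || lexle q p.
Proof.
case: p q => a b [c d]; rewrite /lexle /=.
case: (ltgtP b d) => //= _; exact: le_total.
Qed.

Lemma lexle_trans p q r : lexle p q -> lexle q r -> lexle p r.
Proof.
rewrite /lexle => /orP [h1|/andP [/eqP e1 h1]] /orP [h2|/andP [/eqP e2 h2]].
- by rewrite (lt_trans h1 h2).
- by rewrite -e2 h1.
- by rewrite e1 h2.
- by rewrite e1 e2 eqxx (le_trans h1 h2) orbT.
Qed.

Lemma lexle_neg p q : lexle p q -> p != q -> negk (p.1 - q.1, p.2 - q.2).
Proof.
case: p q => a b [c d]; rewrite /lexle /negk /= => h ne.
have ne' : (a != c) || (b != d).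
  by apply: contraR ne; rewrite negb_or !negbK => /andP [/eqP -> /eqP ->].
case/orP: h => [bd|/andP [/eqP bd ac]]; first by rewrite subr_lt0 bd.
subst d; move: ne'; rewrite eqxx orbF => ac'.
by rewrite subrr ltxx eqxx /= subr_lt0 lt_neqAle ac ac'.
Qed.

Definition kmax (s : seq key) (k0 : key) :=
  foldr (fun p q => if lexle p q then q else p) k0 s.

Lemma kmax_in s k0 : kmax s k0 \in k0 :: s.
Proof.
elim: s => [|p s IH] /=; first by rewrite inE.
case: ifP => _; last by rewrite !inE eqxx orbT.
by move: IH; rewrite !inE => /orP [->|->]; rewrite ?orbT.
Qed.

Lemma kmax_ge s k0 p : p \in k0 :: s -> lexle p (kmax s k0).
Proof.
elim: s p => [|q s IH] p /=; first by rewrite inE => /eqP ->; apply: lexle_refl.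
rewrite !inE => hp; case: ifP => hq.
  move: hp => /orP [/eqP ->|/orP [/eqP ->//|hp]]; first by apply: IH; rewrite inE eqxx.
  by apply: IH; rewrite inE hp orbT.
have hq' : lexle (kmax s k0) q by move: (lexle_total q (kmax s k0)); rewrite hq.
move: hp => /orP [/eqP ->|/orP [/eqP ->|hp]]; last 1 first.
- by apply: lexle_trans hq'; apply: IH; rewrite inE hp orbT.
- by apply: lexle_trans hq'; apply: IH; rewrite inE eqxx.
- by apply: lexle_refl.
Qed.

Lemma growth (x B : F) : 1 < x -> ev (fun m => B < x ^+ m).
Proof.
move=> x1; have x0 : 0 < x - 1 by rewrite subr_gt0.
have b : forall m : nat, 1 + m%:R * (x - 1) <= x ^+ m.
  elim=> [|m IH]; first by rewrite mul0r addr0 expr0.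
  rewrite exprS; have hm : 0 <= m%:R :> F := ler0n _ _.
  apply: le_trans (ler_wpM2l (ltW (lt_trans ltr01 x1)) IH).
  have h := mulr_ge0 hm (ltW (mulr_gt0 x0 x0)); rewrite -natr1; nra.
have hb : 0 <= `|B| / (x - 1) by rewrite divr_ge0 // ltW.
exists (Num.Def.archi_bound (`|B| / (x - 1))) => m hm.
apply: lt_le_trans (b m).
have h1 : `|B| / (x - 1) < m%:R.
  apply: lt_le_trans (archi_boundP hb) _; by rewrite ler_nat.
have h2 : `|B| < m%:R * (x - 1) by rewrite -ltr_pdivrMr.
have h3 : B <= `|B| := ler_norm B.
lra.
Qed.


Lemma expz_negz (x : F) (k m : nat) : x ^ (Negz k * m%:Z) = (x ^+ (k.+1 * m))^-1.
Proof. by rewrite NegzE mulNr -PoszM -exprnN. Qed.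

Lemma expz_le (x : F) (a : int) (m : nat) : 1 <= x -> x ^ (a * m%:Z) <= x ^+ (`|a|%N * m).
Proof.
move=> x1; have x0 : 0 < x by apply: lt_le_trans x1.
case: a => k; first by rewrite -PoszM.
rewrite expz_negz; apply: le_trans (exprn_ege1 _ x1).
by rewrite invr_le1 ?exprn_ege1 ?unitfE ?gt_eqF ?exprn_gt0.
Qed.

Lemma inv_lt (X e : F) : 0 < e -> e^-1 < X -> X^-1 < e.
Proof.
move=> e0 h; have X0 : 0 < X by apply: lt_trans h; rewrite invr_gt0.
move: h; rewrite -(ltr_pM2l e0) mulfV ?gt_eqF // => h.
by rewrite -div1r ltr_pdivrMr // mulrC.
Qed.

Lemma monosmall k e : negk k -> 0 < e -> ev (fun m => mono k m < e).
Proof.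
case: k => a b; rewrite /negk /= => hk he.
case/orP: hk => [hb | /andP [/eqP hb ha]].
- case: b hb => // n _.
  set K := (`|a|%N).
  have [M1 HM1] := growth (mu ^+ K * (1 + e^-1)) la1.
  exists (maxn 1 M1) => m hm.
  have m1 : (1 <= m)%N by apply: leq_trans hm; apply: leq_maxl.
  have hl := HM1 m (leq_trans (leq_maxr _ _) hm).
  have la0m : 0 < la ^+ m by rewrite exprn_gt0 // la0.
  have muK : 0 < mu ^+ K by rewrite exprn_gt0 // mu0.
  set r := mu ^+ K / la ^+ m.
  have r0 : 0 <= r by rewrite /r divr_ge0 // ltW.
  have ie0 : 0 < e^-1 by rewrite invr_gt0.
  have hr : r * (1 + e^-1) < 1.
    by rewrite /r mulrAC ltr_pdivrMr // mul1r.
  have r1 : r <= 1 by nra.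
  have re : r < e.
    have : r / e < 1 by nra.
    by rewrite ltr_pdivrMr // mul1r.
  apply: le_lt_trans (le_lt_trans (ler_iXnr m1 r0 r1) re).
  rewrite /mono /= expz_negz /r expr_div_n -exprM -exprM mulnC.
  apply: ler_pM.
  + by rewrite exprz_ge0 // ltW // mu0.
  + by rewrite invr_ge0 exprn_ge0 // ltW // la0.
  + by apply: expz_le; rewrite ltW.
  rewrite lef_pV2 ?posrE ?exprn_gt0 ?la0 //.
  by rewrite ler_eXn2l // leq_pmulr.
- subst b; case: a ha => // n _.
  have [M1 HM1] := growth (e^-1) mu1.
  exists M1 => m hm.
  rewrite /mono /= mul0r expr0z mulr1 expz_negz.
  apply: le_lt_trans (inv_lt he (HM1 m hm)).
  rewrite lef_pV2 ?posrE ?exprn_gt0 ?mu0 //.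
  by rewrite ler_eXn2l // leq_pmull.
Qed.


Lemma small L : (forall t, t \in L -> negk t.1) ->
  forall d, 0 < d -> ev (fun m => `|phi L m| < d).
Proof.
elim: L => [|t L IH] hL d d0.
  by apply: ev_true => m; rewrite /phi big_nil normr0.
have hc : 0 < `|t.2| + 1 by rewrite ltr_wpDl.
have d2 : 0 < d / 2 by rewrite divr_gt0.
have h1 := monosmall (hL t (mem_head _ _)) (divr_gt0 d2 hc).
have h2 := IH (fun u hu => hL u (mem_behead (s := t :: L) hu)) _ d2.
apply: ev_imp (ev_and h1 h2) => m [hm hp].
rewrite /phi big_cons -/(phi L m).
have mo := mono_gt0 t.1 m.
move: hm; rewrite ltr_pdivlMr // => hm.
apply: le_lt_trans (ler_normD _ _) _.
rewrite normrM (gtr0_norm mo).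
have hn := normr_ge0 t.2.
nra.
Qed.

Lemma phi_sign L : (exists p, cs L p != 0) ->
  ev (fun m => 0 < phi L m) \/ ev (fun m => phi L m < 0).
Proof.
move: {2}(size L) (leqnn (size L)) => n; elim: n L => [|n IH] L.
  by rewrite leqn0 => /nilP -> [p]; rewrite /cs big_nil eqxx.
case: L => [|t L']; first by move=> _ [p]; rewrite /cs big_nil eqxx.
set L := t :: L' => hs hex.
set pm := kmax (map fst L') t.1.
have pmin : pm \in map fst L by exact: kmax_in.
set R := [seq u <- L | u.1 != pm].
case: (eqVneq (cs L pm) 0) => [hz | hnz].
  have hR : (size R <= n)%N by rewrite -ltnS; apply: leq_trans hs; apply: size_filter_lt.
  have hexR : exists p, cs R p != 0.
    case: hex => p hp; exists p; rewrite /R cs_filter.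
    case: (eqVneq p pm) => [e|ne]; first by move: hp; rewrite e hz eqxx.
    by [].
  by case: (IH R hR hexR) => h; [left|right]; apply: ev_imp h => m;
    rewrite (phi_split L pm) hz mul0r add0r.
set sh := map (fun u => ((u.1.1 - pm.1, u.1.2 - pm.2), u.2)) R.
have eR m : phi R m = phi sh m * mono pm m.
  rewrite /phi big_map mulr_suml; apply: eq_bigr => u _ /=.
  rewrite -mulrA -mono_add /= !subrK; by case: u => [[a b] c].
have hneg : forall u, u \in sh -> negk u.1.
  move=> u /mapP [v vR ->] /=; move: vR; rewrite mem_filter => /andP [hv vL].
  apply: lexle_neg => //; apply: kmax_ge.
  by have : v.1 \in map fst L by apply: map_f.
set c := cs L pm.
have ca : 0 < `|c| by rewrite normr_gt0.
have hsm := small hneg ca.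
have eL m : phi L m = (c + phi sh m) * mono pm m by rewrite (phi_split L pm) eR mulrDl.
case: (ltrgtP c 0) => [cn|cp|ce]; last by move: hnz; rewrite -/c ce eqxx.
  right; apply: ev_imp hsm => m hm; rewrite eL pmulr_llt0 ?mono_gt0 //.
  move: hm; rewrite (ltr0_norm cn) => hm; have := ler_norm (phi sh m); lra.
left; apply: ev_imp hsm => m hm; rewrite eL pmulr_lgt0 ?mono_gt0 //.
move: hm; rewrite (gtr0_norm cp) => hm.
have := ler_norm (- phi sh m); rewrite normrN; lra.
Qed.


Definition tmul (tu : (key * F) * (key * F)) : key * F :=
  ((tu.1.1.1 + tu.2.1.1, tu.1.1.2 + tu.2.1.2), tu.1.2 * tu.2.2).
Definition Lmul (L1 L2 : seq (key * F)) := map tmul [seq (t, u) | t <- L1, u <- L2].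
Definition Lneg (L : seq (key * F)) := map (fun t => (t.1, - t.2)) L.
Definition Lc (c : F) : seq (key * F) := [:: ((0, 0), c)].

Lemma phi_cat L1 L2 m : phi (L1 ++ L2) m = phi L1 m + phi L2 m.
Proof. by rewrite /phi big_cat. Qed.

Lemma phi_neg L m : phi (Lneg L) m = - phi L m.
Proof. by rewrite /phi big_map -sumrN; apply: eq_bigr => t _; rewrite mulNr. Qed.

Lemma phi_c c m : phi (Lc c) m = c.
Proof. by rewrite /phi big_cons big_nil /mono /= !mul0r !expr0z !mulr1 addr0. Qed.

Lemma phi_mul L1 L2 m : phi (Lmul L1 L2) m = phi L1 m * phi L2 m.
Proof.
rewrite /phi /Lmul big_map big_allpairs mulr_suml; apply: eq_bigr => t _.
rewrite mulr_sumr; apply: eq_bigr => u _ /=.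
by rewrite mono_add mulrACA.
Qed.

Lemma phi_nil m : phi [::] m = 0.
Proof. by rewrite /phi big_nil. Qed.

Definition kpar (b : bool) (k : key) :=
  if b then (2 %| k.1 + k.2)%Z else (2 %| k.1 + k.2 + 1)%Z.
Definition Lpar (b : bool) (L : seq (key * F)) := all (fun t => kpar b t.1) L.

Lemma Lpar_cat b L1 L2 : Lpar b L1 -> Lpar b L2 -> Lpar b (L1 ++ L2).
Proof. by rewrite /Lpar all_cat => -> ->. Qed.

Lemma Lpar_neg b L : Lpar b L -> Lpar b (Lneg L).
Proof. by rewrite /Lpar all_map. Qed.

Lemma Lpar_c c : Lpar true (Lc c).
Proof. by rewrite /Lpar /= ?andbT /kpar. Qed.

Lemma Lpar_mul b1 b2 L1 L2 : Lpar b1 L1 -> Lpar b2 L2 -> Lpar (b1 == b2) (Lmul L1 L2).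
Proof.
move=> /allP h1 /allP h2; apply/allP => t /mapP [[u v] /allpairsP [[u' v'] [hu hv [-> ->]]] ->].
have := h1 _ hu; have := h2 _ hv; rewrite /kpar /tmul /=; clear h1 h2.
by case: b1; case: b2 => /= H1 H2; lia.
Qed.

Lemma cs_par b L p : Lpar b L -> ~~ kpar b p -> cs L p = 0.
Proof.
move=> /allP h hp; rewrite /cs big_seq_cond big1 // => t /andP [tL /eqP e].
by move: hp; rewrite -e h.
Qed.

Lemma cs_cat L1 L2 p : cs (L1 ++ L2) p = cs L1 p + cs L2 p.
Proof. by rewrite /cs big_cat. Qed.

Lemma cs_neg L p : cs (Lneg L) p = - cs L p.
Proof. by rewrite /cs big_map -sumrN. Qed.

Lemma kpar_excl p : kpar true p -> kpar false p -> False.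
Proof. rewrite /kpar => h1 h2; lia. Qed.

Lemma par_sep E O : Lpar true E -> Lpar false O ->
  (forall M, exists m, (M <= m)%N /\ phi E m = phi O m) -> forall m, phi O m = 0.
Proof.
move=> hE hO hfr; apply: phi0 => p.
have hL : forall q, cs (E ++ Lneg O) q = 0.
  move=> q; case: (eqVneq (cs (E ++ Lneg O) q) 0) => // hq; exfalso.
  have : exists q, cs (E ++ Lneg O) q != 0 by exists q.
  move=> /phi_sign [] [M HM]; case: (hfr M) => m [hm e]; have := HM m hm;
    by rewrite phi_cat phi_neg e subrr ltxx.
move: (hL p); rewrite cs_cat cs_neg.
case: (boolP (kpar true p)) => hp.
  rewrite (cs_par hO) ?subr0 //; apply/negP => hp'; exact: kpar_excl hp hp'.
by rewrite (cs_par hE hp) sub0r => /eqP; rewrite oppr_eq0 => /eqP.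
Qed.

Lemma phi_tri L : (forall m, phi L m = 0) \/ ev (fun m => 0 < phi L m) \/ ev (fun m => phi L m < 0).
Proof.
case: (pselect (exists p, cs L p != 0)) => [h|h]; first by right; apply: phi_sign.
left; apply: phi0 => p; case: (eqVneq (cs L p) 0) => // hp; exfalso; apply: h; by exists p.
Qed.

End Dom.

Section CRing.
Variable F : archiRealFieldType.
Variables mu la : F.
Hypothesis mu1 : 1 < mu.
Hypothesis la1 : 1 < la.

Definition Crep (f : nat -> int) :=
  exists L, Lpar true L /\ forall m, (f m)%:~R = phi mu la L m.

Record C := MkC { cval : nat -> int; cprop : Crep cval; cdum : (mu1, la1) = (mu1, la1) }.

Lemma C_eq (x y : C) : cval x = cval y -> x = y.
Proof.
case: x y => f hf d [g hg d'] /= e; subst g; congr MkC; exact: Prop_irrelevance.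
Qed.

HB.instance Definition _ := gen_eqMixin C.
HB.instance Definition _ := gen_choiceMixin C.

Lemma Crep0 : Crep (fun _ => 0).
Proof. by exists [::]; split => // m; rewrite phi_nil. Qed.
Lemma Crepc (z : int) : Crep (fun _ => z).
Proof. by exists (Lc z%:~R); split; [exact: Lpar_c| move=> m; rewrite phi_c]. Qed.
Lemma Crepopp f : Crep f -> Crep (fun m => - f m).
Proof.
case=> L [hp he]; exists (Lneg L); split; first exact: Lpar_neg.
by move=> m; rewrite phi_neg -he mulrNz.
Qed.
Lemma Crepadd f g : Crep f -> Crep g -> Crep (fun m => f m + g m).
Proof.
case=> L1 [hp1 he1] [L2 [hp2 he2]]; exists (L1 ++ L2); split; first exact: (Lpar_cat hp1 hp2).
by move=> m; rewrite phi_cat -he1 -he2 intrD.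
Qed.
Lemma Crepmul f g : Crep f -> Crep g -> Crep (fun m => f m * g m).
Proof.
case=> L1 [hp1 he1] [L2 [hp2 he2]]; exists (Lmul L1 L2); split.
  by have := Lpar_mul mu1 la1 hp1 hp2.
by move=> m; rewrite (phi_mul mu1 la1) -he1 -he2 intrM.
Qed.

Definition C0 := MkC Crep0 erefl.
Definition Cc z := MkC (Crepc z) erefl.
Definition Copp x := MkC (Crepopp (cprop x)) erefl.
Definition Cadd x y := MkC (Crepadd (cprop x) (cprop y)) erefl.
Definition Cmul x y := MkC (Crepmul (cprop x) (cprop y)) erefl.

Lemma CaddA : associative Cadd.
Proof. by move=> x y z; apply: C_eq; apply: funext => m /=; rewrite addrA. Qed.
Lemma CaddC : commutative Cadd.
Proof. by move=> x y; apply: C_eq; apply: funext => m /=; rewrite addrC. Qed.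
Lemma Cadd0 : left_id C0 Cadd.
Proof. by move=> x; apply: C_eq; apply: funext => m /=; rewrite add0r. Qed.
Lemma CaddN : left_inverse C0 Copp Cadd.
Proof. by move=> x; apply: C_eq; apply: funext => m /=; rewrite addNr. Qed.

HB.instance Definition _ := GRing.isZmodule.Build C CaddA CaddC Cadd0 CaddN.

Lemma CmulA : associative Cmul.
Proof. by move=> x y z; apply: C_eq; apply: funext => m /=; rewrite mulrA. Qed.
Lemma CmulC : commutative Cmul.
Proof. by move=> x y; apply: C_eq; apply: funext => m /=; rewrite mulrC. Qed.
Lemma Cmul1 : left_id (Cc 1) Cmul.
Proof. by move=> x; apply: C_eq; apply: funext => m /=; rewrite mul1r. Qed.
Lemma CmulD : left_distributive Cmul Cadd.
Proof. by move=> x y z; apply: C_eq; apply: funext => m /=; rewrite mulrDl. Qed.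
Lemma C1n0 : Cc 1 != C0.
Proof. by apply/eqP => /(congr1 (fun x => cval x 0%N)). Qed.

HB.instance Definition _ := GRing.Zmodule_isComNzRing.Build C CmulA CmulC Cmul1 CmulD C1n0.

Lemma cvalD (x y : C) m : cval (x + y) m = cval x m + cval y m. Proof. by []. Qed.
Lemma cvalN (x : C) m : cval (- x) m = - cval x m. Proof. by []. Qed.
Lemma cvalM (x y : C) m : cval (x * y) m = cval x m * cval y m. Proof. by []. Qed.
Lemma cval1 m : cval (1 : C) m = 1. Proof. by []. Qed.
Lemma cval0 m : cval (0 : C) m = 0. Proof. by []. Qed.
Lemma cvalB (x y : C) m : cval (x - y) m = cval x m - cval y m. Proof. by []. Qed.
Lemma cvaln (n : nat) m : cval (n%:R : C) m = n%:R.
Proof. by elim: n => [//|n IH]; rewrite !mulrS cvalD IH. Qed.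

Lemma Ctri (x : C) : (forall m, cval x m = 0) \/ ev (fun m => 0 < cval x m) \/ ev (fun m => cval x m < 0).
Proof.
case: x => f [L [hp he]] _ /=.
case: (phi_tri mu1 la1 L) => [h|[h|h]].
- by left => m; move: (he m); rewrite h => /eqP; rewrite intr_eq0 => /eqP.
- by right; left; apply: ev_imp h => m; rewrite -he ltr0z.
- by right; right; apply: ev_imp h => m; rewrite -he ltrz0.
Qed.


Lemma Cev0 (x : C) : ev (fun m => cval x m = 0) -> x = 0.
Proof.
move=> h; case: (Ctri x) => [h0|[hp|hn]].
- by apply: C_eq; apply: funext => m; rewrite h0.
- by case: (ev_and h hp) => M /(_ M (leqnn M)) [-> ]; rewrite ltxx.
- by case: (ev_and h hn) => M /(_ M (leqnn M)) [-> ]; rewrite ltxx.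
Qed.

Lemma Cfreq0 (x : C) : (forall M, exists m, (M <= m)%N /\ cval x m = 0) -> x = 0.
Proof.
move=> h; case: (Ctri x) => [h0|[[M hp]|[M hn]]].
- by apply: C_eq; apply: funext => m; rewrite h0.
- by case: (h M) => m [hm e]; move: (hp m hm); rewrite e ltxx.
- by case: (h M) => m [hm e]; move: (hn m hm); rewrite e ltxx.
Qed.

Lemma Cnz_ev (x : C) : x != 0 -> ev (fun m => cval x m != 0).
Proof.
move=> hx; case: (Ctri x) => [h0|[hp|hn]].
- by move: hx; rewrite (_ : x = 0) ?eqxx //; apply: C_eq; apply: funext => m; rewrite h0.
- by apply: ev_imp hp => m /gt_eqF ->.
- by apply: ev_imp hn => m /lt_eqF ->.
Qed.

Definition Cunit : {pred C} := fun x => `[< x = 1 \/ x = -1 >].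
Definition Cinv (x : C) := x.

Lemma CmulVx : {in Cunit, left_inverse 1 Cinv *%R}.
Proof.
move=> x /asboolP [->|->]; rewrite /Cinv ?mulr1 //.
by rewrite mulrNN mulr1.
Qed.

Lemma CunitPl (x y : C) : y * x = 1 -> Cunit x.
Proof.
move=> e; apply/asboolP.
have hx : forall m, cval x m = 1 \/ cval x m = -1.
  move=> m; have := congr1 (fun z => cval z m) e; rewrite cvalM cval1.
  by move=> /intUnitRing.unitzPl /orP [] /eqP; [left|right].
case: (eqVneq (x - 1) 0) => [/eqP|hn]; first by rewrite subr_eq0 => /eqP; left.
right; apply/eqP; rewrite -addr_eq0; apply/eqP; apply: Cev0.
apply: ev_imp (Cnz_ev hn) => m; rewrite cvalB cvalD cval1.
by case: (hx m) => ->; rewrite ?subrr ?eqxx.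
Qed.

Lemma Cinv_out : {in [predC Cunit], Cinv =1 id}.
Proof. by []. Qed.

HB.instance Definition _ := GRing.ComNzRing_hasMulInverse.Build C CmulVx CunitPl Cinv_out.

Lemma Cintegral : GRing.integral_domain_axiom C.
Proof.
move=> x y e; apply/orP; case: (eqVneq x 0) => [hx0|hx]; first by left; apply/eqP.
case: (eqVneq y 0) => [hy0|hy]; first by right; apply/eqP.
exfalso; case: (ev_and (Cnz_ev hx) (Cnz_ev hy)) => M /(_ M (leqnn M)) [h1 h2].
have := congr1 (fun z => cval z M) e; rewrite cvalM cval0 => /eqP.
by rewrite mulf_eq0 (negbTE h1) (negbTE h2).
Qed.

HB.instance Definition _ := GRing.ComUnitRing_isIntegral.Build C Cintegral.

Definition Rle (x y : C) := `[< ev (fun m => cval x m <= cval y m) >].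
Definition Rlt (x y : C) := (y != x) && Rle x y.
Definition Cnorm (x : C) := if Rle 0 x then x else - x.

Lemma RleP (x y : C) : reflect (ev (fun m => cval x m <= cval y m)) (Rle x y).
Proof. exact: asboolP. Qed.

Lemma Rle_tri (x : C) : x = 0 \/ (Rle 0 x /\ ~~ Rle x 0) \/ (Rle x 0 /\ ~~ Rle 0 x).
Proof.
case: (Ctri x) => [h0|[hp|hn]].
- by left; apply: C_eq; apply: funext => m; rewrite h0.
- right; left; split; first by apply/RleP; apply: ev_imp hp => m /ltW.
  apply/RleP => hle; case: (ev_and hp hle) => M /(_ M (leqnn M)) [].
  by rewrite cval0 => h1 h2; move: (lt_le_trans h1 h2); rewrite ltxx.
- right; right; split; first by apply/RleP; apply: ev_imp hn => m /ltW.
  apply/RleP => hle; case: (ev_and hn hle) => M /(_ M (leqnn M)) [].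
  by rewrite cval0 => h1 h2; move: (lt_le_trans h1 h2); rewrite ltxx.
Qed.

Lemma Rle0_add (x y : C) : Rle 0 x -> Rle 0 y -> Rle 0 (x + y).
Proof.
move=> /RleP h1 /RleP h2; apply/RleP; apply: ev_imp (ev_and h1 h2) => m [].
by rewrite cvalD cval0 => a b; rewrite addr_ge0.
Qed.
Lemma Rle0_mul (x y : C) : Rle 0 x -> Rle 0 y -> Rle 0 (x * y).
Proof.
move=> /RleP h1 /RleP h2; apply/RleP; apply: ev_imp (ev_and h1 h2) => m [].
by rewrite cvalM cval0 => a b; rewrite mulr_ge0.
Qed.
Lemma Rle0_anti (x : C) : Rle 0 x -> Rle x 0 -> x = 0.
Proof.
move=> /RleP h1 /RleP h2; apply: Cev0; apply: ev_imp (ev_and h1 h2) => m [].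
by rewrite cval0 => a b; apply/eqP; rewrite eq_le a b.
Qed.
Lemma Rsub_ge0 (x y : C) : Rle 0 (y - x) = Rle x y.
Proof.
apply/idP/idP => /RleP h; apply/RleP; apply: ev_imp h => m;
  by rewrite cvalB cval0 subr_ge0.
Qed.
Lemma Rle0_total (x : C) : Rle 0 x || Rle x 0.
Proof.
case: (Rle_tri x) => [->|[[->]|[-> _]]]; rewrite ?orbT //.
by apply/orP; left; apply/RleP; apply: ev_true.
Qed.
Lemma RleN (x : C) : Rle 0 (- x) = Rle x 0.
Proof. by rewrite -(Rsub_ge0 x 0) sub0r. Qed.
Lemma RNle (x : C) : Rle (- x) 0 = Rle 0 x.
Proof. by rewrite -(Rsub_ge0 (- x) 0) sub0r opprK. Qed.
Lemma CnormN (x : C) : Cnorm (- x) = Cnorm x.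
Proof.
rewrite /Cnorm RleN opprK.
case: (Rle_tri x) => [->|[[h1 h2]|[h1 h2]]]; rewrite ?oppr0 ?h1 ?(negbTE h2) //.
Qed.
Lemma Cge0_norm (x : C) : Rle 0 x -> Cnorm x = x.
Proof. by rewrite /Cnorm => ->. Qed.
Lemma Rlt_def (x y : C) : Rlt x y = (y != x) && Rle x y.
Proof. by []. Qed.

HB.instance Definition _ := Num.IntegralDomain_isLeReal.Build C
  Rle0_add Rle0_mul Rle0_anti Rsub_ge0 Rle0_total CnormN Cge0_norm Rlt_def.

Lemma CleE (x y : C) : (x <= y) = Rle x y.
Proof. by []. Qed.

End CRing.

Section Models.
Variable F : archiRealFieldType.
Variables mu la : F.
Hypothesis mu1 : 1 < mu.
Hypothesis la1 : 1 < la.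
Local Notation CT := (C mu1 la1).

Lemma C_discrete : discrete CT.
Proof.
move=> x; rewrite lt_def CleE => /andP [hx /RleP hle]; rewrite CleE; apply/RleP.
case: (Ctri x) => [h0|[hp|hn]].
- by move: hx; rewrite (_ : x = 0) ?eqxx //; apply: C_eq; apply: funext => m; rewrite h0.
- by apply: ev_imp hp => m; rewrite cval1 => h; lia.
- case: (ev_and hle hn) => M /(_ M (leqnn M)) []; rewrite cval0 => h1 h2; lia.
Qed.

Lemma teval_cval (e : nat -> CT) t m :
  cval (teval 0 1 +%R *%R e t) m = teval 0 1 +%R *%R (fun i => cval (e i) m) t.
Proof. by elim: t => //= t1 IH1 t2 IH2; rewrite ?cvalD ?cvalM IH1 IH2. Qed.

Lemma teval_nat (e : nat -> nat) t :
  (teval 0%N 1%N addn muln e t)%:Z = teval 0 1 +%R *%R (fun i => (e i)%:Z) t.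
Proof. by elim: t => //= t1 IH1 t2 IH2; rewrite ?PoszD ?PoszM IH1 IH2. Qed.

Section Assign.
Variable e : nat -> CT.
Hypothesis he : forall i, 0 <= e i.
Definition eN m i := `|cval (e i) m|%N.

Lemma teval_ev t : ev (fun m => (teval 0%N 1%N addn muln (eN m) t)%:Z =
  cval (teval 0 1 +%R *%R e t) m).
Proof.
elim: t => [i|||t1 IH1 t2 IH2|t1 IH1 t2 IH2] /=.
- have := he i; rewrite CleE => /RleP; apply: ev_imp => m; rewrite cval0 /eN => h.
  by rewrite gez0_abs.
- exact: ev_true.
- exact: ev_true.
- by apply: ev_imp (ev_and IH1 IH2) => m [h1 h2]; rewrite PoszD h1 h2.
- by apply: ev_imp (ev_and IH1 IH2) => m [h1 h2]; rewrite PoszM h1 h2.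
Qed.

Lemma feval_ev f : ev (fun m => feval 0%N 1%N addn muln (fun a b => (a <= b)%N) (eN m) f
  <-> feval 0 1 +%R *%R (fun a b : CT => a <= b) e f).
Proof.
elim: f => [t1 t2|t1 t2|f IH|f1 IH1 f2 IH2|f1 IH1 f2 IH2|f1 IH1 f2 IH2] /=.
- set x1 := teval _ _ _ _ e t1; set x2 := teval _ _ _ _ e t2.
  case: (Ctri (x1 - x2)) => [h0|[hp|hn]].
  + have ex : x1 = x2.
      by apply: C_eq; apply: funext => m; move: (h0 m); rewrite cvalB => /eqP; rewrite subr_eq0 => /eqP.
    apply: ev_imp (ev_and (teval_ev t1) (teval_ev t2)) => m [h1 h2]; split => // _.
    by apply/eqP; rewrite -eqz_nat h1 h2 -/x1 -/x2 ex.
  + apply: ev_imp (ev_and hp (ev_and (teval_ev t1) (teval_ev t2))) => m [hd [h1 h2]].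
    split => E; exfalso.
      by move: hd; rewrite cvalB -h1 -h2 E subrr ltxx.
    by move: hd; rewrite E subrr cval0 ltxx.
  + apply: ev_imp (ev_and hn (ev_and (teval_ev t1) (teval_ev t2))) => m [hd [h1 h2]].
    split => E; exfalso.
      by move: hd; rewrite cvalB -h1 -h2 E subrr ltxx.
    by move: hd; rewrite E subrr cval0 ltxx.
- set x1 := teval _ _ _ _ e t1; set x2 := teval _ _ _ _ e t2.
  rewrite CleE.
  case: (Ctri (x2 - x1)) => [h0|[hp|hn]].
  + apply: ev_imp (ev_and (teval_ev t1) (teval_ev t2)) => m [h1 h2]; split => _.
      by apply/RleP; apply: ev_true => k; move: (h0 k); rewrite cvalB => /eqP; rewrite subr_eq0 => /eqP ->.
    by rewrite -lez_nat h1 h2; move: (h0 m); rewrite cvalB => /eqP; rewrite subr_eq0 => /eqP ->.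
  + apply: ev_imp (ev_and hp (ev_and (teval_ev t1) (teval_ev t2))) => m [hd [h1 h2]].
    split => _.
      by apply/RleP; apply: ev_imp hp => k; rewrite cvalB subr_gt0 => /ltW.
    by rewrite -lez_nat h1 h2; move: hd; rewrite cvalB subr_gt0 => /ltW.
  + have nle : ~ Rle x1 x2.
      move=> /RleP hl; case: (ev_and hl hn) => M /(_ M (leqnn M)) [].
      by rewrite cvalB subr_lt0 => a b; move: (le_lt_trans a b); rewrite ltxx.
    apply: ev_imp (ev_and hn (ev_and (teval_ev t1) (teval_ev t2))) => m [hd [h1 h2]].
    split => E; exfalso; last exact: nle.
    by move: E hd; rewrite -lez_nat h1 h2 cvalB subr_lt0 => a b; move: (le_lt_trans a b); rewrite ltxx.
- by apply: ev_imp IH => m [a b]; split => h1 h2; apply: h1; [apply: b|apply: a].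
- by apply: ev_imp (ev_and IH1 IH2) => m [[a b] [c d]]; split => -[x y]; split; auto.
- by apply: ev_imp (ev_and IH1 IH2) => m [[a b] [c d]]; split => -[x|y]; auto.
- by apply: ev_imp (ev_and IH1 IH2) => m [[a b] [c d]]; split => x y; auto.
Qed.

End Assign.

Lemma C_models_T : models_T CT.
Proof.
split; first exact: C_discrete.
move=> f hf e he; case: (feval_ev he f) => M /(_ M (leqnn M)) [h _]; apply: h; exact: hf.
Qed.

End Models.

Section Words.
Local Notation M := (mat int).
Local Notation I := (matI int).
Local Notation A := (matA int).
Local Notation B := (matB int).

Lemma mmulE (X Y : M) : mmul X Y = Mat (m00 X * m00 Y + m01 X * m10 Y) (m00 X * m01 Y + m01 X * m11 Y)
      (m10 X * m00 Y + m11 X * m10 Y) (m10 X * m01 Y + m11 X * m11 Y).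
Proof. by []. Qed.
Lemma minvE (X : M) : minv X = Mat (m11 X) (- m01 X) (- m10 X) (m00 X).
Proof. by []. Qed.
Lemma matAE : A = Mat 1 1 0 1. Proof. by []. Qed.
Lemma matBE : B = Mat 1 0 1 1. Proof. by []. Qed.
Lemma matIE : I = Mat 1 0 0 1. Proof. by []. Qed.
Lemma mcodeE (n : int) : mcode n = Mat 1 n 1 (n + 1). Proof. by []. Qed.
Lemma nonnegE (X : M) : nonneg X <-> [/\ 0 <= m00 X, 0 <= m01 X, 0 <= m10 X & 0 <= m11 X].
Proof. by []. Qed.
Definition matE := (mmulE, minvE, matAE, matBE, matIE, mcodeE).

Definition det (X : M) := m00 X * m11 X - m01 X * m10 X.
Definition sl2 (X : M) := [/\ 0 <= m00 X, 0 <= m01 X, 0 <= m10 X, 0 <= m11 X & det X = 1].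
Lemma sl2pE (X : M) : sl2p X <-> sl2 X. Proof. by []. Qed.

Lemma mat_eq (X Y : M) : m00 X = m00 Y -> m01 X = m01 Y -> m10 X = m10 Y -> m11 X = m11 Y -> X = Y.
Proof. by case: X Y => a b c d [a' b' c' d'] /= -> -> -> ->. Qed.

Lemma mmulA (X Y Z : M) : mmul X (mmul Y Z) = mmul (mmul X Y) Z.
Proof. by case: X Y Z => ? ? ? ? [? ? ? ?] [? ? ? ?]; apply: mat_eq => /=; ring. Qed.
Lemma mmul1 (X : M) : mmul I X = X.
Proof. by case: X => ? ? ? ?; apply: mat_eq => /=; ring. Qed.
Lemma mmulr1 (X : M) : mmul X I = X.
Proof. by case: X => ? ? ? ?; apply: mat_eq => /=; ring. Qed.
Lemma detM (X Y : M) : det (mmul X Y) = det X * det Y.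
Proof. by case: X Y => ? ? ? ? [? ? ? ?]; rewrite /det /=; ring. Qed.
Lemma det_inv (X : M) : det (minv X) = det X.
Proof. by case: X => ? ? ? ?; rewrite /det /=; ring. Qed.
Lemma minvK (X Y : M) : det X = 1 -> mmul (minv X) (mmul X Y) = Y.
Proof.
case: X Y => a b c d [a' b' c' d']; rewrite /det /= => h.
apply: mat_eq => /=; rewrite -[RHS]mul1r -{1}h; ring.
Qed.
Lemma mulKinv (X Y : M) : det X = 1 -> mmul X (mmul (minv X) Y) = Y.
Proof.
case: X Y => a b c d [a' b' c' d']; rewrite /det /= => h.
apply: mat_eq => /=; rewrite -[RHS]mul1r -{1}h; ring.
Qed.
Lemma minvKr (X Y : M) : det X = 1 -> mmul (mmul Y X) (minv X) = Y.
Proof.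
case: X Y => a b c d [a' b' c' d']; rewrite /det /= => h.
apply: mat_eq => /=; rewrite -[RHS]mul1r -{1}h; ring.
Qed.
Lemma mulKinvr (X Y : M) : det X = 1 -> mmul (mmul Y (minv X)) X = Y.
Proof.
case: X Y => a b c d [a' b' c' d']; rewrite /det /= => h.
apply: mat_eq => /=; rewrite -[RHS]mul1r -{1}h; ring.
Qed.

Definition wmat (w : seq bool) : M := foldr (fun b X => mmul (if b then B else A) X) I w.

Lemma wmat_cat u v : wmat (u ++ v) = mmul (wmat u) (wmat v).
Proof. by elim: u => [|b u IH] /=; rewrite ?mmul1 // IH mmulA. Qed.

Lemma wmat_sl2 w : sl2 (wmat w).
Proof.
elim: w => [|b w [h0 h1 h2 h3 hd]] /=; first by rewrite /sl2 /det /=.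
move: hd; rewrite /sl2 /det; case: b; rewrite !matE /= => hd; split; nia.
Qed.

Lemma wmat_diag w : 1 <= m00 (wmat w) /\ 1 <= m11 (wmat w).
Proof.
elim: w => [|b w [e0 e1]] /=; first by [].
have [h0 h1 h2 h3 _] := wmat_sl2 w.
by case: b; rewrite !matE /=; lia.
Qed.

Lemma wmat_head_ne u v : wmat (true :: u) <> wmat (false :: v).
Proof.
move=> /= e; have [a0 a1 a2 a3 ha] := wmat_sl2 u; have [b0 b1 b2 b3 hb] := wmat_sl2 v.
move: (congr1 (@m00 _) e) (congr1 (@m01 _) e) (congr1 (@m10 _) e) (congr1 (@m11 _) e) ha hb.
rewrite /det !matE /=; nia.
Qed.

Lemma wmat_nil_ne b u : wmat [::] <> wmat (b :: u).
Proof.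
have [a0 a1 a2 a3 ha] := wmat_sl2 u.
case: b => /= e;
move: (congr1 (@m00 _) e) (congr1 (@m01 _) e) (congr1 (@m10 _) e) (congr1 (@m11 _) e) ha;
rewrite /det !matE /=; nia.
Qed.

Lemma wmat_inj : injective wmat.
Proof.
elim=> [|b u IH] [|c v] //.
- by move/wmat_nil_ne.
- by move=> e; symmetry in e; move/wmat_nil_ne: e.
- have dB : det B = 1 by [].
  have dA : det A = 1 by [].
  case: b; case: c => e.
  + by congr cons; apply: IH; move: e => /= e; rewrite -(minvK (wmat u) dB) e minvK.
  + by move/wmat_head_ne: e.
  + by symmetry in e; move/wmat_head_ne: e.
  + by congr cons; apply: IH; move: e => /= e; rewrite -(minvK (wmat u) dA) e minvK.
Qed.

Lemma wmat_surj (X : M) : sl2 X -> exists w, X = wmat w.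
Proof.
move: {2}(`|(m00 X + m01 X + m10 X + m11 X)%R|%N) (leqnn (`|(m00 X + m01 X + m10 X + m11 X)%R|%N)) => n.
elim: n X => [|n IH] [p q r s] /=.
  rewrite leqn0 => /eqP h [h0 h1 h2 h3]; rewrite /det /= => hd; exfalso.
  move: h0 h1 h2 h3 => /= h0 h1 h2 h3; nia.
move=> hn [h0 h1 h2 h3]; rewrite /det /= => hd.
move: h0 h1 h2 h3 => /= h0 h1 h2 h3.
case: (boolP ((p == 1) && (q == 0) && (r == 0) && (s == 1))) => [/andP [/andP [/andP [/eqP -> /eqP ->] /eqP ->] /eqP ->]|hI].
  by exists [::].
have rs : 0 < r + s by nia.
have pq : 0 < p + q by nia.
have [hA|hB] : (r <= p /\ s <= q) \/ (p <= r /\ q <= s).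
  move: hI; rewrite !negb_and; nia.
- have hs : (`|((p - r) + (q - s) + (r) + (s))%R|%N <= n)%N by lia.
  have hsl : sl2 (Mat (p - r) (q - s) (r) (s)) by split; rewrite /det /=; lia.
  have [w ew] := IH (Mat (p - r) (q - s) r s) hs hsl.
  exists (false :: w); rewrite /= -ew; rewrite !matE; apply: mat_eq => /=; lia.
- have hs : (`|((p) + (q) + (r - p) + (s - q))%R|%N <= n)%N by lia.
  have hsl : sl2 (Mat (p) (q) (r - p) (s - q)) by split; rewrite /det /=; lia.
  have [w ew] := IH (Mat p q (r - p) (s - q)) hs hsl.
  exists (true :: w); rewrite /= -ew; rewrite !matE; apply: mat_eq => /=; lia.
Qed.


Definition blk (k : nat) : seq bool := true :: nseq k false.
Definition flat (ks : seq nat) := flatten (map blk ks).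
Definition starts (v : seq bool) := if v is b :: _ then b else true.

Lemma starts_flat ks : starts (flat ks).
Proof. by case: ks. Qed.

Lemma flat_cat ks1 ks2 : flat (ks1 ++ ks2) = flat ks1 ++ flat ks2.
Proof. by rewrite /flat map_cat flatten_cat. Qed.

Lemma flat_rcons ks k : flat (rcons ks k) = flat ks ++ blk k.
Proof. by rewrite -cats1 flat_cat /flat /= cats0. Qed.

Lemma nseq_split k u v z : u ++ v = nseq k false ++ z -> starts v -> starts z ->
  exists u', u = nseq k false ++ u' /\ u' ++ v = z.
Proof.
elim: k u => [|k IH] u /=; first by move=> e _ _; exists u.
case: u => [|c u] /=; first by move=> ->.
by case=> -> e hv hz; have [u' [-> e']] := IH u e hv hz; exists u'.
Qed.

Lemma BB ks u v : u ++ v = flat ks -> starts v ->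
  exists j, (j <= size ks)%N /\ u = flat (take j ks).
Proof.
elim: ks u => [|k ks IH] u /=.
  by case: u => // _ _; exists 0%N.
case: u => [|b u] e hv; first by exists 0%N.
move: e => [eb e]; subst b.
have [u' [eu e']] := nseq_split e hv (starts_flat ks).
have [j [hj ej]] := IH u' e' hv.
by exists j.+1; split => //=; rewrite eu ej.
Qed.

Lemma rcons_nseq_eq n k s s' :
  rcons (nseq n false) true ++ s = rcons (nseq k false) true ++ s' -> n = k.
Proof. by elim: n k => [|n IH] [|k] //= [] /IH ->. Qed.

Lemma blk_last y y' n k : y ++ blk n = y' ++ blk k -> n = k.
Proof.
move/(congr1 rev); rewrite !rev_cat /blk !rev_cons !rev_nseq.
exact: rcons_nseq_eq.
Qed.

Lemma wmat_nseqA (n : nat) : wmat (nseq n false) = Mat 1 n%:Z 0 1.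
Proof.
elim: n => [|n IH] /=; first by rewrite matE.
by rewrite IH !matE; apply: mat_eq => /=; lia.
Qed.

Lemma mcode_wmat (n : nat) : mcode (n%:Z) = wmat (blk n).
Proof. by rewrite /blk /= wmat_nseqA !matE; apply: mat_eq => /=; lia. Qed.

Lemma sl2_mul X Y : sl2 X -> sl2 Y -> det (mmul X Y) = 1.
Proof. by case=> _ _ _ _ h1 [_ _ _ _ h2]; rewrite detM h1 h2 mulr1. Qed.

Lemma nonneg_det1 X : nonneg X -> det X = 1 -> exists w, X = wmat w.
Proof. by case=> h0 h1 h2 h3 hd; apply: wmat_surj. Qed.

Lemma ur_starts v : ur (wmat v) -> starts v.
Proof.
case=> [e|h].
  by have := wmat_inj (e : wmat v = wmat [::]) => ->.
have hd : det (mmul (minv B) (wmat v)) = 1.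
  by rewrite detM det_inv; case: (wmat_sl2 v) => _ _ _ _ ->.
have [v' ev'] := nonneg_det1 h hd.
have : wmat v = wmat (true :: v') by rewrite /= -ev' mulKinv.
by move/wmat_inj ->.
Qed.

Lemma occ_pw ks (a : M) (n : int) : sl2 a -> 0 <= n -> occ a n (wmat (flat ks)) ->
  exists j, [/\ (0 < j <= size ks)%N, a = wmat (flat (take j ks)) & n = (nth 0%N ks j.-1)%:Z].
Proof.
move=> ha hn [[hi hua hur] [he hun hue]].
have [u eu] := wmat_surj ha; subst a.
have hd1 : det (mmul (minv (wmat u)) (wmat (flat ks))) = 1.
  by rewrite detM det_inv; case: (wmat_sl2 u) => _ _ _ _ ->; case: (wmat_sl2 (flat ks)) => _ _ _ _ ->.
have [v ev] := nonneg_det1 hi hd1.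
have ew : flat ks = u ++ v.
  by apply: wmat_inj; rewrite wmat_cat -ev mulKinv //; case: (wmat_sl2 u).
have sv : starts v by apply: ur_starts; rewrite -ev.
case: n hn hun hue he => // n' _ _ _ he.
have hd2 : det (mmul (wmat u) (minv (mcode n'%:Z))) = 1.
  by rewrite detM det_inv mcode_wmat; case: (wmat_sl2 u) => _ _ _ _ ->; case: (wmat_sl2 (blk n')) => _ _ _ _ ->.
have [y ey] := nonneg_det1 he hd2.
have euy : u = y ++ blk n'.
  apply: wmat_inj; rewrite wmat_cat -ey -mcode_wmat mulKinvr //.
  by rewrite mcode_wmat; case: (wmat_sl2 (blk n')).
have [j [hj ej]] := BB (esym ew) sv.
have j0 : (0 < j)%N.
  by case: j ej {hj} => // ej; move: euy; rewrite ej take0 /= => /(congr1 size); rewrite size_cat /=; lia.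
exists j; split => //; first by rewrite j0.
  by rewrite ej.
congr Posz; move: euy; rewrite ej.
have -> : take j ks = rcons (take j.-1 ks) (nth 0%N ks j.-1).
  by rewrite -take_nth ?prednK //; lia.
rewrite flat_rcons => /blk_last ->.
done.
Qed.


Lemma occ_pw2 (m M h g : nat) a n : sl2 a -> 0 <= n ->
  occ a n (wmat (flat (nseq m h ++ nseq M g))) ->
  (exists j, [/\ (0 < j <= m)%N, a = wmat (flat (nseq j h)) & n = h%:Z]) \/
  (exists i, [/\ (0 < i <= M)%N, a = wmat (flat (nseq m h ++ nseq i g)) & n = g%:Z]).
Proof.
move=> ha hn ho; have [j [hj ea en]] := occ_pw ha hn ho.
move: hj; rewrite size_cat !size_nseq => /andP [j0 jb].
case: (leqP j m) => hjm.
  left; exists j; split; first by rewrite j0.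
    rewrite ea take_cat size_nseq; case: ltnP => hh; first by rewrite take_nseq // ltnW.
    have ejm : j = m by lia.
    by rewrite ejm subnn take0 cats0.
  have hj1 : (j.-1 < m)%N by lia.
  by rewrite en nth_cat size_nseq hj1 nth_nseq hj1.
right; exists (j - m)%N; split; first by apply/andP; split; lia.
  by rewrite ea take_cat size_nseq ltnNge (ltnW hjm) /= take_nseq //; lia.
have hj1 : (m <= j.-1)%N by lia.
have hj2 : (j.-1 - m < M)%N by lia.
by rewrite en nth_cat size_nseq ltnNge hj1 /= nth_nseq hj2.
Qed.

Lemma wmat_nonneg w : nonneg (wmat w).
Proof. by case: (wmat_sl2 w) => h0 h1 h2 h3 _; split. Qed.

Lemma wmat_det w : det (wmat w) = 1.
Proof. by case: (wmat_sl2 w). Qed.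

Lemma pre_eq u v : mmul (minv (wmat u)) (wmat (u ++ v)) = wmat v.
Proof. by rewrite wmat_cat minvK // wmat_det. Qed.

Lemma suf_eq y v : mmul (wmat (y ++ v)) (minv (wmat v)) = wmat y.
Proof. by rewrite wmat_cat minvKr // wmat_det. Qed.

Lemma preB_eq v : mmul (minv B) (wmat (true :: v)) = wmat v.
Proof. by rewrite (pre_eq [:: true] v). Qed.

Lemma wmat_le u v : mle (wmat u) (wmat (u ++ v)).
Proof.
rewrite wmat_cat; have [h0 h1 h2 h3 _] := wmat_sl2 u; have [k0 k1 k2 k3 _] := wmat_sl2 v.
have [d0 d1] := wmat_diag v.
rewrite /mle !matE /=; split; nia.
Qed.

Lemma wmat_ne u v : v <> [::] -> wmat u <> wmat (u ++ v).
Proof.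
move=> hv /wmat_inj /(congr1 size); rewrite size_cat; case: v hv => // b v _ /=; lia.
Qed.

End Words.

Local Notation RA := realalg.

Definition trc (k : nat) : RA := (k + 2)%:R.
Definition eig (k : nat) : RA := (trc k + Num.sqrt (trc k ^+ 2 - 4)) / 2.
Definition eigi (k : nat) : RA := (trc k - Num.sqrt (trc k ^+ 2 - 4)) / 2.

Lemma trc_ge2 k : 2 <= trc k.
Proof. by rewrite /trc natrD ler_wpDl. Qed.

Lemma disc_ge0 k : 0 <= trc k ^+ 2 - 4.
Proof. have := trc_ge2 k; nra. Qed.

Lemma eig_mul k : eig k * eigi k = 1.
Proof.
rewrite /eig /eigi; have h := sqr_sqrtr (disc_ge0 k).
set s := Num.sqrt _ in h *; set t := trc k in h *.
have -> : (t + s) / 2 * ((t - s) / 2) = (t ^+ 2 - s ^+ 2) / 4.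
  by rewrite -[4]/(2 * 2)%:R natrM; field; rewrite ?pnatr_eq0.
by rewrite h; field; rewrite ?pnatr_eq0.
Qed.

Lemma eig_add k : eig k + eigi k = trc k.
Proof. by rewrite /eig /eigi; field; rewrite ?pnatr_eq0. Qed.

Lemma eig_sub k : (0 < k)%N -> 0 < eig k - eigi k.
Proof.
move=> k0; have -> : eig k - eigi k = Num.sqrt (trc k ^+ 2 - 4).
  by rewrite /eig /eigi; field; rewrite ?pnatr_eq0.
rewrite sqrtr_gt0; have : 3 <= trc k by rewrite /trc (_ : 3 = (1 + 2)%:R) // ler_nat; lia.
nra.
Qed.

Lemma eig_gt1 k : (0 < k)%N -> 1 < eig k.
Proof.
move=> k0; have h1 := eig_sub k0; have h2 := eig_add k.
have : 3 <= trc k by rewrite /trc (_ : 3 = (1 + 2)%:R) // ler_nat; lia.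
lra.
Qed.

Lemma eigiE k : (0 < k)%N -> eigi k = (eig k)^-1.
Proof.
move=> k0; have e0 : eig k != 0 by rewrite gt_eqF // (lt_trans ltr01 (eig_gt1 k0)).
by rewrite -[eigi k]mul1r -(mulVf e0) -mulrA eig_mul mulr1.
Qed.

Fixpoint Up (t : int) (n : nat) : int * int :=
  if n is n'.+1 then let p := Up t n' in (t * p.1 - p.2, p.1) else (0, -1).

Definition ent (X : mat int) (i j : bool) : int :=
  match i, j with
  | false, false => m00 X | false, true => m01 X
  | true, false => m10 X | true, true => m11 X end.

Lemma ent_mmul X Y i j : ent (mmul X Y) i j = ent X i false * ent Y false j + ent X i true * ent Y true j.
Proof. by case: i; case: j. Qed.

Definition Xpow (k n : nat) := wmat (flat (nseq n k)).
Definition dlt (i j : bool) : int := if i == j then 1 else 0.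

Lemma XpowS k n : Xpow k n.+1 = mmul (mcode k%:Z) (Xpow k n).
Proof. rewrite /Xpow mcode_wmat -wmat_cat; congr wmat. Qed.

Lemma Xpow_U k n i j :
  ent (Xpow k n) i j = (Up (k + 2)%:Z n).1 * ent (mcode k%:Z) i j - (Up (k + 2)%:Z n).2 * dlt i j.
Proof.
elim: n i j => [|n IH] i j.
  by rewrite /Xpow /dlt /=; case: i; case: j; rewrite /= ?matE /=; lia.
rewrite XpowS ent_mmul !IH /=; case: i; case: j; rewrite /= ?matE /= /dlt /=; ring.
Qed.


Lemma Up_closed_gen (F : fieldType) (e f : F) (t : int) :
  e * f = 1 -> e + f = t%:~R -> e - f != 0 -> forall n,
  ((Up t n).1)%:~R = (e - f)^-1 * (e ^+ n - f ^+ n) /\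
  ((Up t n).2)%:~R = (e - f)^-1 * (f * e ^+ n - e * f ^+ n).
Proof.
move=> ef es ed; elim=> [|n [IH1 IH2]] /=.
  rewrite !expr0 subrr mulr0 !mulr1; split => //.
  rewrite -[f - e]opprB mulrN mulVf //.
rewrite mulrzBr intrM IH1 IH2; split; last first.
  congr (_ * _); rewrite !exprS !mulrA ef [f * e]mulrC ef !mul1r.
  done.
rewrite -es !exprS.
have -> : (e + f) * ((e - f)^-1 * (e ^+ n - f ^+ n)) - (e - f)^-1 * (f * e ^+ n - e * f ^+ n)
  = (e - f)^-1 * ((e + f) * (e ^+ n - f ^+ n) - (f * e ^+ n - e * f ^+ n)) by ring.
congr (_ * _); ring.
Qed.

Lemma Xpow_closed (F : fieldType) (e f : F) k n i j :
  e * f = 1 -> e + f = (k + 2)%:Z%:~R -> e - f != 0 ->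
  (ent (Xpow k n) i j)%:~R =
    e ^+ n * ((e - f)^-1 * ((ent (mcode k%:Z) i j)%:~R - f * (dlt i j)%:~R)) +
    f ^+ n * ((e - f)^-1 * (e * (dlt i j)%:~R - (ent (mcode k%:Z) i j)%:~R)).
Proof.
move=> ef es ed; rewrite Xpow_U mulrzBr !intrM.
have [h1 h2] := Up_closed_gen ef es ed n; rewrite h1 h2; ring.
Qed.

Section Conc.
Variables h g : nat.
Hypothesis h0 : (0 < h)%N.
Hypothesis g0 : (0 < g)%N.
Definition mu := eig h.
Definition la := eig g.
Lemma mu1 : 1 < mu. Proof. exact: eig_gt1. Qed.
Lemma la1 : 1 < la. Proof. exact: eig_gt1. Qed.

Definition alX k i j : RA := (eig k - eigi k)^-1 * ((ent (mcode k%:Z) i j)%:~R - eigi k * (dlt i j)%:~R).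
Definition beX k i j : RA := (eig k - eigi k)^-1 * (eig k * (dlt i j)%:~R - (ent (mcode k%:Z) i j)%:~R).

Definition LH i j : seq (key * RA) := [:: ((1, 0), alX h i j); ((-1, 0), beX h i j)].
Definition LG i j : seq (key * RA) := [:: ((0, 1), alX g i j); ((0, -1), beX g i j)].

Lemma trcE k : (k + 2)%:Z%:~R = trc k :> RA.
Proof. by rewrite /trc -pmulrn. Qed.

Lemma LH_ok m i j : (ent (Xpow h m) i j)%:~R = phi mu la (LH i j) m.
Proof.
rewrite (Xpow_closed m i j (eig_mul h) _ (lt0r_neq0 (eig_sub h0))); last by rewrite trcE eig_add.
rewrite /phi !big_cons big_nil addr0 /mono /= mul1r mulN1r !mul0r !expr0z !mulr1.
rewrite -exprnN -exprVn -eigiE //.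
by rewrite [X in X + _]mulrC [X in _ + X]mulrC.
Qed.

Lemma LG_ok m i j : (ent (Xpow g (m * m)) i j)%:~R = phi mu la (LG i j) m.
Proof.
rewrite (Xpow_closed (m * m) i j (eig_mul g) _ (lt0r_neq0 (eig_sub g0))); last by rewrite trcE eig_add.
rewrite /phi !big_cons big_nil addr0 /mono /= mul1r mulN1r !mul0r !expr0z !mul1r.
rewrite -exprnN -exprVn -eigiE //.
by rewrite [X in X + _]mulrC [X in _ + X]mulrC.
Qed.

Lemma LH_par i j : Lpar false (LH i j).
Proof. by rewrite /Lpar /= /kpar /=. Qed.
Lemma LG_par i j : Lpar false (LG i j).
Proof. by rewrite /Lpar /= /kpar /=. Qed.

End Conc.

Section Transfer.
Variable F : archiRealFieldType.
Variables mu la : F.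
Hypothesis mu1 : 1 < mu.
Hypothesis la1 : 1 < la.
Local Notation CT := (C mu1 la1).

Definition evm (m : nat) (x : mat CT) : mat int :=
  Mat (cval (m00 x) m) (cval (m01 x) m) (cval (m10 x) m) (cval (m11 x) m).

Lemma le_ev (x y : CT) : x <= y -> ev (fun m => cval x m <= cval y m).
Proof. by rewrite CleE => /RleP. Qed.
Lemma ev_le (x y : CT) : ev (fun m => cval x m <= cval y m) -> x <= y.
Proof. by rewrite CleE => /RleP. Qed.

Lemma nonneg_ev (x : mat CT) : nonneg x -> ev (fun m => nonneg (evm m x)).
Proof.
case=> h0 h1 h2 h3.
apply: ev_imp (ev_and (le_ev h0) (ev_and (le_ev h1) (ev_and (le_ev h2) (le_ev h3)))).
by move=> m [a [b [c d]]]; split.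
Qed.
Lemma ev_nonneg (x : mat CT) : ev (fun m => nonneg (evm m x)) -> nonneg x.
Proof.
move=> h; split; apply: ev_le; apply: ev_imp h => m; by case.
Qed.
Lemma mle_ev (x y : mat CT) : mle x y -> ev (fun m => mle (evm m x) (evm m y)).
Proof.
case=> h0 h1 h2 h3.
apply: ev_imp (ev_and (le_ev h0) (ev_and (le_ev h1) (ev_and (le_ev h2) (le_ev h3)))).
by move=> m [a [b [c d]]]; split.
Qed.
Lemma ev_mle (x y : mat CT) : ev (fun m => mle (evm m x) (evm m y)) -> mle x y.
Proof.
move=> h; split; apply: ev_le; apply: ev_imp h => m; by case.
Qed.

Lemma evm_mmul x y m : evm m (mmul x y) = mmul (evm m x) (evm m y).
Proof. by []. Qed.
Lemma evm_minv x m : evm m (minv x) = minv (evm m x).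
Proof. by []. Qed.
Lemma evm_I m : evm m (matI CT) = matI int. Proof. by []. Qed.
Lemma evm_B m : evm m (matB CT) = matB int. Proof. by []. Qed.
Lemma evm_mcode (n : CT) m : evm m (mcode n) = mcode (cval n m). Proof. by []. Qed.
Lemma cvalnZ (n : nat) m : cval (n%:R : CT) m = n%:Z.
Proof. by rewrite cvaln natz. Qed.

Lemma evm_inj (x y : mat CT) : (forall m, evm m x = evm m y) -> x = y.
Proof.
case: x y => a b c d [a' b' c' d'] h.
have h0 m := congr1 (@m00 _) (h m); have h1 m := congr1 (@m01 _) (h m).
have h2 m := congr1 (@m10 _) (h m); have h3 m := congr1 (@m11 _) (h m).
simpl in h0, h1, h2, h3.
by congr Mat; apply: C_eq; apply: funext.
Qed.


Lemma ur_ev (x : mat CT) : ur x -> ev (fun m => ur (evm m x)).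
Proof.
case=> [->|h]; first by apply: ev_true => m; left.
by apply: ev_imp (nonneg_ev h) => m hm; right.
Qed.

Lemma occ_ev (a : mat CT) (n : CT) (p : mat CT) : occ a n p ->
  ev (fun m => occ (evm m a) (cval n m) (evm m p)).
Proof.
case=> [[h1 h2 h3] [h4 h5 h6]].
have e1 := nonneg_ev h1; have e2 := ur_ev h2; have e3 := ur_ev h3.
have e4 := nonneg_ev h4; have e5 := ur_ev h5; have e6 := ur_ev h6.
apply: ev_imp (ev_and e1 (ev_and e2 (ev_and e3 (ev_and e4 (ev_and e5 e6))))).
by move=> m [a1 [a2 [a3 [a4 [a5 a6]]]]]; split; split.
Qed.

Lemma sl2p_ev (x : mat CT) : sl2p x -> ev (fun m => sl2 (evm m x)).
Proof.
case=> h0 h1 h2 h3 hd.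
have hd' : forall m, det (evm m x) = 1.
  by move=> m; have := congr1 (fun z => cval z m) hd.
apply: ev_imp (ev_and (le_ev h0) (ev_and (le_ev h1) (ev_and (le_ev h2) (le_ev h3)))).
by move=> m [a [b [c d]]]; split.
Qed.

Lemma ev_or_freq (P : nat -> Prop) : ev P \/ (forall M, exists m, (M <= m)%N /\ ~ P m).
Proof.
case: (pselect (ev P)) => [h|h]; first by left.
right => M; apply: contrapT => hM; apply: h; exists M => m hm.
by apply: contrapT => hp; apply: hM; exists m.
Qed.

Lemma two_vals (x : CT) (a b : nat) : ev (fun m => cval x m = a%:Z \/ cval x m = b%:Z) ->
  x = a%:R \/ x = b%:R.
Proof.
move=> h; case: (ev_or_freq (fun m => cval x m <> a%:Z)) => [hn|hf].
  right; apply/eqP; rewrite -subr_eq0; apply/eqP; apply: Cev0.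
  apply: ev_imp (ev_and h hn) => m [[e|e] ne] //.
  by rewrite cvalB cvalnZ e subrr.
left; apply/eqP; rewrite -subr_eq0; apply/eqP; apply: Cfreq0 => M.
case: (hf M) => m [hm hne]; exists m; split => //.
rewrite cvalB cvalnZ; apply/eqP; rewrite subr_eq0; apply/eqP.
by apply: contrapT.
Qed.


Lemma sl2p_of_ev (x : mat CT) : (forall m, det (evm m x) = 1) -> ev (fun m => nonneg (evm m x)) -> sl2p x.
Proof.
move=> hd hn; have [h0 h1 h2 h3] := ev_nonneg hn; split => //.
by apply: C_eq; apply: funext => m; exact: hd.
Qed.

Lemma sl2p_det (x : mat CT) : sl2p x -> forall m, det (evm m x) = 1.
Proof. by case=> _ _ _ _ hd m; have := congr1 (fun z => cval z m) hd. Qed.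

End Transfer.

Section Main.
Variables h g : nat.
Hypothesis h0 : (0 < h)%N.
Hypothesis g0 : (0 < g)%N.
Hypothesis hg : h <> g.
Local Notation CT := (C (mu1 h0) (la1 g0)).
Local Notation muh := (mu h).
Local Notation lag := (la g).

Definition pif (m : nat) : mat int := wmat (flat (nseq m h ++ nseq (m * m) g)).
Definition Pf (m : nat) : mat int := mmul (Xpow h m) (mcode g%:Z).

Lemma pif_mul m : pif m = mmul (Xpow h m) (Xpow g (m * m)).
Proof. by rewrite /pif flat_cat wmat_cat. Qed.

Lemma pi_rep i j : Crep muh lag (fun m => ent (pif m) i j).
Proof.
exists (Lmul (LH h i false) (LG g false j) ++ Lmul (LH h i true) (LG g true j)); split.
  apply: Lpar_cat.
    by have := Lpar_mul (mu1 h0) (la1 g0) (LH_par h i false) (LG_par g false j).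
  by have := Lpar_mul (mu1 h0) (la1 g0) (LH_par h i true) (LG_par g true j).
move=> m; rewrite pif_mul ent_mmul intrD !intrM (LH_ok g h0) (LG_ok h g0) (LH_ok g h0) (LG_ok h g0).
by rewrite phi_cat !(phi_mul (mu1 h0) (la1 g0)).
Qed.

Lemma P_rep i j : exists O, Lpar false O /\ forall m, (ent (Pf m) i j)%:~R = phi muh lag O m.
Proof.
exists (Lmul (LH h i false) (Lc (ent (mcode g%:Z) false j)%:~R) ++
        Lmul (LH h i true) (Lc (ent (mcode g%:Z) true j)%:~R)); split.
  apply: Lpar_cat.
    by have := Lpar_mul (mu1 h0) (la1 g0) (LH_par h i false) (Lpar_c (ent (mcode g%:Z) false j)%:~R).
  by have := Lpar_mul (mu1 h0) (la1 g0) (LH_par h i true) (Lpar_c (ent (mcode g%:Z) true j)%:~R).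
move=> m; rewrite /Pf ent_mmul intrD !intrM (LH_ok g h0) (LH_ok g h0).
by rewrite phi_cat !(phi_mul (mu1 h0) (la1 g0)) !phi_c.
Qed.

Definition piC : mat CT :=
  Mat (MkC (pi_rep false false) erefl) (MkC (pi_rep false true) erefl)
      (MkC (pi_rep true false) erefl) (MkC (pi_rep true true) erefl).

Lemma evm_pi m : evm m piC = pif m.
Proof. by rewrite /evm /=; case: (pif m). Qed.


Lemma nseq_snoc (n : nat) (x : nat) : nseq n.+1 x = nseq n x ++ [:: x].
Proof. by rewrite -addn1 nseqD. Qed.

Lemma flat_snoc ks k : flat (ks ++ [:: k]) = flat ks ++ blk k.
Proof. by rewrite flat_cat /flat /= cats0. Qed.

Lemma flat_hS (m : nat) s : flat (nseq m.+1 h ++ s) = blk h ++ flat (nseq m h ++ s).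
Proof. by []. Qed.

Lemma wB_nonneg w : nonneg (mmul (minv (matB int)) (wmat (true :: w))).
Proof. by rewrite preB_eq; apply: wmat_nonneg. Qed.

Lemma mcode_B (k : nat) : nonneg (mmul (minv (matB int)) (mcode k%:Z)).
Proof. by rewrite mcode_wmat; apply: wB_nonneg. Qed.

Lemma PW_ur m : (0 < m)%N -> nonneg (mmul (minv (matB int)) (pif m)).
Proof. by case: m => // m _; rewrite /pif flat_hS; apply: wB_nonneg. Qed.

Lemma PW_end m : (0 < m)%N -> nonneg (mmul (pif m) (minv (mcode g%:Z))).
Proof.
move=> m0; rewrite /pif (_ : (m * m)%N = (m * m).-1.+1); last by rewrite prednK // muln_gt0 m0.
by rewrite nseq_snoc catA flat_snoc mcode_wmat suf_eq; apply: wmat_nonneg.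
Qed.

Lemma Pf_wmat m : Pf m = wmat (flat (nseq m h ++ nseq 1 g)).
Proof. by rewrite /Pf flat_cat wmat_cat mcode_wmat /Xpow /flat /= cats0. Qed.

Lemma Pf00 m : 1 <= m00 (Pf m).
Proof. by rewrite Pf_wmat; case: (wmat_diag (flat (nseq m h ++ nseq 1 g))). Qed.


Lemma a_split m i : flat (nseq m h ++ nseq i.+1 g) = flat (nseq m h ++ nseq i g) ++ blk g.
Proof. by rewrite nseq_snoc catA flat_snoc. Qed.

Lemma flat_ne ks : ks <> [::] -> exists w, flat ks = true :: w.
Proof. by case: ks => // k ks _; exists (nseq k false ++ flat ks). Qed.

Lemma mcode_inv (k : nat) : mmul (mcode k%:Z) (minv (mcode k%:Z)) = matI int.
Proof. by rewrite mcode_wmat (suf_eq [::] (blk k)). Qed.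

Lemma mcode_det (k : nat) : det (mcode k%:Z) = 1.
Proof. by rewrite mcode_wmat wmat_det. Qed.

Lemma sl2p_pi : sl2p piC.
Proof.
apply: sl2p_of_ev => [m|]; first by rewrite evm_pi wmat_det.
by apply: ev_true => m; rewrite evm_pi; apply: wmat_nonneg.
Qed.

Lemma not_con : ~ con_BeSh CT g h.
Proof.
move=> hc; apply: (hc piC sl2p_pi); split; last first.
  apply: ev_nonneg; exists 1%N => m m1.
  by rewrite evm_mmul evm_minv evm_mcode cvalnZ evm_pi; apply: PW_end.
split.
- right; apply: ev_nonneg; exists 1%N => m m1.
  by rewrite evm_mmul evm_minv evm_B evm_pi; apply: PW_ur.
- move=> a ha hle n hn0 hnle ho.
  have e := ev_and (sl2p_ev ha) (ev_and (le_ev hn0) (occ_ev ho)).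
  apply: two_vals; apply: ev_imp e => m [sa [hn' oc]].
  rewrite evm_pi /pif in oc.
  by case: (occ_pw2 sa hn' oc) => [[j [_ _ ->]]|[i [_ _ ->]]]; [left|right].
move=> a ha hle ho.
have e := ev_and (sl2p_ev ha) (occ_ev ho).
have key : ev (fun m => (0 < m)%N /\ exists i, (0 < i)%N /\ evm m a = wmat (flat (nseq m h ++ nseq i g))).
  have ev1 : ev (fun m => (0 < m)%N) by exists 1%N.
  apply: ev_imp (ev_and e ev1) => m [[sa oc] m1]; split => //.
  rewrite evm_pi /pif cvalnZ in oc.
  have hg0 : 0 <= g%:Z by [].
  case: (occ_pw2 sa hg0 oc) => [[j [_ _ /eqP]]|[i [/andP [i0 _] ea _]]].
    by rewrite eqz_nat => /eqP e'; exfalso; apply: hg.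
  by exists i.
have nP : ev (fun m => evm m a <> Pf m).
  case: (ev_or_freq (fun m => evm m a <> Pf m)) => // hf; exfalso.
  have [O [hO eO]] := P_rep false false.
  case: (cprop (m00 a)) => E [hE eE].
  have hfr : forall M, exists m, (M <= m)%N /\ phi muh lag E m = phi muh lag O m.
    move=> M; case: (hf M) => m [hm hne]; exists m; split => //.
    have ea : evm m a = Pf m by apply: contrapT.
    by rewrite -eE -eO -ea.
  have := par_sep (mu1 h0) (la1 g0) hE hO hfr 0%N.
  rewrite -eO => /eqP; rewrite intr_eq0 => /eqP h00.
  by move: (Pf00 0); rewrite -[m00 (Pf 0)]/(ent (Pf 0) false false) h00.
have key2 : ev (fun m => exists m' i, [/\ m = m'.+1, (0 < i)%N &
    evm m a = wmat (flat (nseq m'.+1 h ++ nseq i.+1 g))]).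
  apply: ev_imp (ev_and key nP) => m [[m1 [i [i0 ea]]] np].
  case: m m1 ea np => // m' _ ea np.
  case: i i0 ea => // -[|i] _ ea.
    by exfalso; apply: np; rewrite ea Pf_wmat.
  by exists m', i.+1.
have [b eb0] : exists b : mat CT, b = mmul a (minv (mcode (g%:R : CT))) by eexists.
have [c ec0] : exists c : mat CT, c = mcode (h%:R : CT) by eexists.
have eb m : evm m b = mmul (evm m a) (minv (mcode g%:Z)).
  by rewrite eb0 evm_mmul evm_minv evm_mcode cvalnZ.
have ec m : evm m c = mcode h%:Z by rewrite ec0 evm_mcode cvalnZ.
have Vne m' i : nseq m' h ++ nseq i.+1 g <> [::] by case: m'.
exists b, c; split.
- apply: sl2p_of_ev => [m|].
    by rewrite eb detM det_inv (sl2p_det ha) mcode_det mulr1.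
  apply: ev_imp key2 => m [m' [i [-> i0 ea]]].
  by rewrite eb ea a_split mcode_wmat suf_eq; apply: wmat_nonneg.
- apply: sl2p_of_ev => [m|]; first by rewrite ec mcode_det.
  by apply: ev_true => m; rewrite ec mcode_wmat; apply: wmat_nonneg.
- split.
    apply: ev_mle; apply: ev_imp key2 => m [m' [i [-> i0 ea]]].
    by rewrite eb ea a_split mcode_wmat suf_eq; apply: wmat_le.
  move=> e0; case: key2 => M HM; have [m' [i [em i0 ea]]] := HM M (leqnn M).
  have := congr1 (evm M) e0; rewrite eb ea a_split mcode_wmat suf_eq.
  by apply: wmat_ne.
- split.
    apply: ev_mle; apply: ev_imp key2 => m [m' [i [-> i0 ea]]].
    by rewrite ec ea mcode_wmat flat_hS; apply: wmat_le.
  move=> e0; case: key2 => M HM; have [m' [i [em i0 ea]]] := HM M (leqnn M).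
  have := congr1 (evm M) e0; rewrite ec ea mcode_wmat flat_hS.
  apply: wmat_ne; have [w ->] := flat_ne (Vne m' i); done.
split; split; split.
- apply: ev_nonneg; apply: ev_imp key2 => m [m' [i [-> i0 ea]]].
  by rewrite evm_mmul evm_minv eb ea a_split mcode_wmat suf_eq pre_eq; apply: wmat_nonneg.
- right; apply: ev_nonneg; apply: ev_imp key2 => m [m' [i [-> i0 ea]]].
  by rewrite evm_mmul evm_minv evm_B eb ea a_split mcode_wmat suf_eq flat_hS; apply: wB_nonneg.
- right; apply: ev_nonneg; apply: ev_imp key2 => m [m' [i [-> i0 ea]]].
  rewrite !evm_mmul !evm_minv evm_B eb ea a_split mcode_wmat suf_eq pre_eq.
  by apply: wB_nonneg.
- apply: ev_nonneg; apply: ev_imp key2 => m [m' [i [-> i0 ea]]].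
  case: i i0 ea => // i' _ ea.
  rewrite evm_mmul evm_minv evm_mcode cvalnZ.
  by rewrite eb ea a_split mcode_wmat suf_eq a_split suf_eq; apply: wmat_nonneg.
- right; apply: ev_nonneg; apply: ev_true => m.
  by rewrite evm_mmul evm_minv evm_B evm_mcode cvalnZ; apply: mcode_B.
- right; apply: ev_nonneg; apply: ev_imp key2 => m [m' [i [-> i0 ea]]].
  case: i i0 ea => // i' _ ea.
  rewrite evm_mmul evm_minv evm_B evm_mmul evm_minv evm_mcode cvalnZ.
  rewrite eb ea a_split mcode_wmat suf_eq a_split suf_eq flat_hS.
  by apply: wB_nonneg.
- apply: ev_nonneg; apply: ev_imp key2 => m [m' [i [-> i0 ea]]].
  by rewrite evm_mmul evm_minv ec ea mcode_wmat flat_hS pre_eq; apply: wmat_nonneg.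
- right; apply: ev_nonneg; apply: ev_true => m.
  by rewrite evm_mmul evm_minv evm_B ec; apply: mcode_B.
- right; apply: ev_nonneg; apply: ev_imp key2 => m [m' [i [-> i0 ea]]].
  rewrite evm_mmul evm_minv evm_B evm_mmul evm_minv ec ea mcode_wmat flat_hS pre_eq.
  by have [w ->] := flat_ne (Vne m' i); apply: wB_nonneg.
- apply: ev_nonneg; apply: ev_true => m.
  by rewrite evm_mmul evm_minv ec evm_mcode cvalnZ mcode_inv.
- right; apply: ev_nonneg; apply: ev_true => m.
  by rewrite evm_mmul evm_minv evm_B evm_mcode cvalnZ; apply: mcode_B.
- left; apply: evm_inj => m.
  by rewrite evm_mmul evm_minv ec evm_mcode cvalnZ mcode_inv evm_I.
Qed.

End Main.

Theorem mainTheorem1 (gb gbb : nat) :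
  (0 < gb)%N -> (0 < gbb)%N -> gb <> gbb ->
  exists R : realDomainType, models_T R /\ ~ con_BeSh R gb gbb.
Proof.
move=> g0 h0 ne; exists (C (mu1 h0) (la1 g0)); split.
  exact: C_models_T.
by apply: not_con => e; apply: ne.
Qed.
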